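(* Let $d_1$ be a positive integer, let $p_{10}<p_{11}<\cdots<p_{1d_1}$ and $p_{20}<p_{21}$ be real numbers (so $d_2=1$), and let $$S=\bigl\{(x_1,x_2,\mu)\in\mathbb{R}^2\times\mathbb{R} : \mu=x_1x_2,\ x_1\in\{p_{10},\dots,p_{1d_1}\},\ x_2\in\{p_{20},p_{21}\}\bigr\}.$$ Consider the set $E$ of all $(x_1,x_2,\mu,\boldsymbol{z}_1,z_{21})\in\mathbb{R}^2\times\mathbb{R}\times\{0,1\}^{d_1}\times\{0,1\}$ with $\boldsymbol{z}_1=(z_{11},\dots,z_{1d_1})$ satisfying $x_1=p_{10}+\sum_{j=1}^{d_1}(p_{1j}-p_{1,j-1})z_{1j}$, $1\ge z_{11}\ge z_{12}\ge\cdots\ge z_{1d_1}\ge 0$, $x_2=p_{20}+(p_{21}-p_{20})z_{21}$, $1\ge z_{21}\ge 0$, and the four inequalities \begin{align*} \mu&\le p_{10}p_{20}+p_{10}(p_{21}-p_{20})z_{21}+\textstyle\sum_{j=1}^{d_1}p_{21}(p_{1j}-p_{1,j-1})z_{1j},\\ \mu&\le p_{10}p_{20}+\textstyle\sum_{j=1}^{d_1}p_{20}(p_{1j}-p_{1,j-1})z_{1j}+p_{1d_1}(p_{21}-p_{20})z_{21},\\ \mu&\ge p_{10}p_{21}+p_{10}(p_{20}-p_{21})(1-z_{21})+\textstyle\sum_{j=1}^{d_1}p_{20}(p_{1j}-p_{1,j-1})z_{1j},\\ \mu&\ge p_{10}p_{21}+\textstyle\sum_{j=1}^{d_1}p_{21}(p_{1j}-p_{1,j-1})z_{1j}+p_{1d_1}(p_{20}-p_{21})(1-z_{21}).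 \end{align*} Then $E$ is an MIP formulation of $S$, i.e., the projection of $E$ onto the $(x_1,x_2,\mu)$ variables equals $S$.
   Context: An MIP formulation of a set $S\subseteq\mathbb{R}^k$ is a set of the form $E=\{(\boldsymbol{x},\boldsymbol{y},\boldsymbol{z})\in Q:\boldsymbol{z}\in\{0,1\}^q\}$, with $Q$ a polyhedron, whose projection onto the $\boldsymbol{x}$-variables equals $S$. *)

(* Defs.v *)
From HB Require Import structures.
From mathcomp Require Import all_boot all_order all_algebra.
Set Implicit Arguments. Unset Strict Implicit. Unset Printing Implicit Defensive.
Import Order.TTheory GRing.Theory Num.Theory.
Local Open Scope ring_scope.

Definition S_set (R : realFieldType) (d1 : nat) (p1 : nat -> R) (p20 p21 : R)
  (x1 x2 mu : R) : Prop :=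
  mu = x1 * x2 /\ (exists j : nat, (j <= d1)%N /\ x1 = p1 j) /\ (x2 = p20 \/ x2 = p21).

(* The set E (binary variables z1 j, j = 1..d1, and z21 take values in {0,1}).
   Only the values z1 1, ..., z1 d1 of z1 : nat -> R are used. *)
Definition E_set (R : realFieldType) (d1 : nat) (p1 : nat -> R) (p20 p21 : R)
  (x1 x2 mu : R) (z1 : nat -> R) (z21 : R) : Prop :=
  (forall j, (1 <= j <= d1)%N -> z1 j = 0 \/ z1 j = 1) /\
  (z21 = 0 \/ z21 = 1) /\
  x1 = p1 0%N + \sum_(1 <= j < d1.+1) (p1 j - p1 j.-1) * z1 j /\
  (1 >= z1 1%N) /\
  (forall j, (1 <= j < d1)%N -> z1 j >= z1 j.+1) /\
  (z1 d1 >= 0) /\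
  x2 = p20 + (p21 - p20) * z21 /\
  (1 >= z21) /\ (z21 >= 0) /\
  mu <= p1 0%N * p20 + p1 0%N * (p21 - p20) * z21
        + \sum_(1 <= j < d1.+1) p21 * (p1 j - p1 j.-1) * z1 j /\
  mu <= p1 0%N * p20 + \sum_(1 <= j < d1.+1) p20 * (p1 j - p1 j.-1) * z1 j
        + p1 d1 * (p21 - p20) * z21 /\
  mu >= p1 0%N * p21 + p1 0%N * (p20 - p21) * (1 - z21)
        + \sum_(1 <= j < d1.+1) p20 * (p1 j - p1 j.-1) * z1 j /\
  mu >= p1 0%N * p21 + \sum_(1 <= j < d1.+1) p21 * (p1 j - p1 j.-1) * z1 j
        + p1 d1 * (p20 - p21) * (1 - z21).

(* Main.v *)
Require Import Defs.
From HB Require Import structures.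
From mathcomp Require Import all_boot all_order all_algebra.
From mathcomp Require Import ring lra zify.
Import Order.TTheory GRing.Theory Num.Theory.
Local Open Scope ring_scope.

Lemma sum_ind_lemma (R : realFieldType) (p z : nat -> R) (n : nat) :
  (forall j, (1 <= j <= n)%N -> z j = 0 \/ z j = 1) ->
  (forall j, (1 <= j < n)%N -> z j >= z j.+1) ->
  exists k, (k <= n)%N /\
    \sum_(1 <= j < n.+1) (p j - p j.-1) * z j = p k - p 0%N /\
    ((k < n)%N -> z n = 0).
Proof.
elim: n => [|n IH] Hb Hm.
  by exists 0%N; rewrite big_geq // subrr.
have [k [Hk [Hs Hi]]] : exists k, (k <= n)%N /\
    \sum_(1 <= j < n.+1) (p j - p j.-1) * z j = p k - p 0%N /\
    ((k < n)%N -> z n = 0).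
  apply: IH => j Hj; [apply: Hb | apply: Hm]; lia.
rewrite big_nat_recr //= Hs.
have := Hb n.+1; case => [|Hz|Hz]; first lia; rewrite Hz.
- exists k; split; first lia; split; first by rewrite mulr0 addr0.
  by [].
- have Hkn : k = n.
    case: (ltngtP k n) => // Hlt; last lia.
    have z0 := Hi Hlt.
    have H : z n.+1 <= z n by apply: Hm; lia.
    by move: H; rewrite z0 Hz ler10.
  subst k; exists n.+1; split => //; split; last lia.
  rewrite mulr1; ring.
Qed.

Lemma sum_fwd (R : realFieldType) (p : nat -> R) (k n : nat) :
  \sum_(1 <= j < n.+1) (p j - p j.-1) * (if (j <= k)%N then 1 else 0)
  = p (minn n k) - p 0%N.
Proof.
elim: n => [|n IH].
  by rewrite big_geq // min0n subrr.
rewrite big_nat_recr //= IH.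
case: (leqP n.+1 k) => H.
- rewrite mulr1.
  have -> : minn n k = n by lia.
  try (have -> : minn n.+1 k = n.+1 by lia).
  ring.
- idtac.
  rewrite mulr0 addr0.
  have -> : minn n k = k by lia.
  try (have -> : minn n.+1 k = k by lia).
  by [].
Qed.

Lemma mono_p (R : realFieldType) (p : nat -> R) (d : nat) :
  (forall j : nat, (j < d)%N -> p j < p j.+1) ->
  forall i j, (i <= j <= d)%N -> p i <= p j.
Proof.
move=> Hp i; elim => [|j IH] Hij.
  by have -> : i = 0%N by lia.
case: (leqP i j) => H.
  apply: le_trans (IH _) _; first lia.
  apply: ltW; apply: Hp; lia.
by have -> : i = j.+1 by lia.
Qed.

Theorem proposition1 (R : realFieldType) (d1 : nat) (p1 : nat -> R) (p20 p21 : R) :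
  (0 < d1)%N ->
  (forall j : nat, (j < d1)%N -> p1 j < p1 j.+1) ->
  p20 < p21 ->
  forall x1 x2 mu : R,
    S_set d1 p1 p20 p21 x1 x2 mu <->
    exists (z1 : nat -> R) (z21 : R), E_set d1 p1 p20 p21 x1 x2 mu z1 z21.
Proof.
move=> Hd Hp H2 x1 x2 mu; split.
- move=> [Hmu [[k [Hk Hx1]] Hx2]].
  have Ha : p1 0%N <= p1 k by apply: (@mono_p _ _ _ Hp); lia.
  have Hb : p1 k <= p1 d1 by apply: (@mono_p _ _ _ Hp); lia.
  set z := fun j : nat => (if (j <= k)%N then 1 else 0) : R.
  have Hs : forall c : R, \sum_(1 <= j < d1.+1) c * (p1 j - p1 j.-1) * z j
            = c * (p1 k - p1 0%N).
    move=> c; rewrite -(minn_idPr Hk) -sum_fwd mulr_sumr.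
    by apply: eq_bigr => j _; rewrite mulrA.
  have Hs1 : \sum_(1 <= j < d1.+1) (p1 j - p1 j.-1) * z j = p1 k - p1 0%N.
    by rewrite /z sum_fwd (minn_idPr Hk).
  have Hd' : (1 <= d1)%N by [].
  case: Hx2 => Hx2.
  + exists z, 0; rewrite /E_set Hs1 !Hs /z.
    do 12?split.
    * by move=> j _; case: ifP => _; [right|left].
    * by left.
    * by rewrite Hx1; ring.
    * by case: ifP => _; rewrite ?ler01.
    * by move=> j Hj; case: (leqP j.+1 k) => H; rewrite ?(leq_trans (leqnSn _) H) //; case: ifP.
    * by case: ifP => _; rewrite ?ler01.
    * by rewrite Hx2; ring.
    * by rewrite ler01.
    * by [].
    * rewrite Hmu Hx1 Hx2; nra.
    * rewrite Hmu Hx1 Hx2; nra.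
    * rewrite Hmu Hx1 Hx2; nra.
    * rewrite Hmu Hx1 Hx2; nra.
  + exists z, 1; rewrite /E_set Hs1 !Hs /z.
    do 12?split.
    * by move=> j _; case: ifP => _; [right|left].
    * by right.
    * by rewrite Hx1; ring.
    * by case: ifP => _; rewrite ?ler01.
    * by move=> j Hj; case: (leqP j.+1 k) => H; rewrite ?(leq_trans (leqnSn _) H) //; case: ifP.
    * by case: ifP => _; rewrite ?ler01.
    * by rewrite Hx2; ring.
    * by [].
    * by rewrite ler01.
    * rewrite Hmu Hx1 Hx2; nra.
    * rewrite Hmu Hx1 Hx2; nra.
    * rewrite Hmu Hx1 Hx2; nra.
    * rewrite Hmu Hx1 Hx2; nra.
- move=> [z [z21 [Hbin [Hz21 [Hx1 [_ [Hmono [_ [Hx2 [_ [_ [I1 [I2 [I3 I4]]]]]]]]]]]]]].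
  have [k [Hk [Hs _]]] := @sum_ind_lemma _ p1 _ _ Hbin Hmono.
  have Hs' : forall c : R, \sum_(1 <= j < d1.+1) c * (p1 j - p1 j.-1) * z j
            = c * (p1 k - p1 0%N).
    move=> c; rewrite -Hs mulr_sumr.
    by apply: eq_bigr => j _; rewrite mulrA.
  rewrite !Hs' in I1 I2 I3 I4.
  rewrite Hs in Hx1.
  have Hx1' : x1 = p1 k by rewrite Hx1; ring.
  split; last split.
  + case: Hz21 => Hz; rewrite Hz in I1 I2 I3 I4 Hx2; rewrite Hx2 Hx1';
    apply/eqP; rewrite eq_le; apply/andP; split; nra.
  + by exists k.
  + case: Hz21 => Hz; rewrite Hz in Hx2; [left|right]; rewrite Hx2; ring.
Qed.
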